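(* Let $(M,\widetilde B)$ be a root of unity quantum seed and $\mathrm{inv}\subseteq[1,N]\setminus\mathrm{ex}$. Then the root of unity quantum cluster algebra $\mathcal A_\varepsilon(M,\widetilde B,\mathrm{inv})$ and the root of unity upper quantum cluster algebra $\mathcal U_\varepsilon(M,\widetilde B,\mathrm{inv})$ are both polynomial identity (PI) domains.
   Context: Let $\ell$ be a positive integer, $\mathbb Z_\ell=\mathbb Z/\ell\mathbb Z$, $\varepsilon^{1/2}\in\mathbb C$ a primitive $\ell$-th root of unity, $\varepsilon=(\varepsilon^{1/2})^2$, and $\mathcal A^{1/2}_\varepsilon=\mathbb Z[\varepsilon^{1/2}]$. For $a\in\mathbb Z_\ell$ put $\varepsilon^{a/2}=(\varepsilon^{1/2})^a$. For an integer matrix $C$, $\overline C$ denotes its reduction mod $\ell$; $e_1,\dots,e_N$ is the standard basis of $\mathbb Z^N$. For a skew-symmetric bilinear form $\Lambda:\mathbb Z^N\times\mathbb Z^N\to\mathbb Z_\ell$ (identified with its matrix $(\lambda_{ij})=(\Lambda(e_i,e_j))$), $\mathcal T_\varepsilon(\Lambda)$ is the $\mathcal A^{1/2}_\varepsilon$-algebra with basis $\{X^f\}_{f\in\mathbb Z^N}$ and product $X^fX^g=\varepsilon^{\Lambda(f,g)/2}X^{f+g}$. A root of unity toric frame of a division algebra $\mathcal F$ over $\mathbb Q(\varepsilon^{1/2})$ is a map $M:\mathbb Z^N\to\mathcal F$ for which there are a skew-symmetric $\Lambda$ (necessarily unique; denoted $\Lambda_M$) and an injective $\mathcal A^{1/2}_\varepsilon$-algebra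 homomorphism $\phi:\mathcal T_\varepsilon(\Lambda)\to\mathcal F$ with $\phi(X^f)=M(f)$ for all $f$ and with $\mathcal F$ the skew field of fractions of $\phi(\mathcal T_\varepsilon(\Lambda))$. Fix $\mathrm{ex}\subseteq[1,N]$. An exchange matrix $\widetilde B=(b_{ij})$ is an integer matrix with rows indexed by $[1,N]$ and columns by $\mathrm{ex}$; its principal part $B$ is the $\mathrm{ex}\times\mathrm{ex}$ submatrix, and $b^k\in\mathbb Z^N$ is its $k$-th column. $(\Lambda,\widetilde B)$ is $\ell$-compatible if there is $D=\mathrm{diag}(d_j)_{j\in\mathrm{ex}}$ with positive integer entries such that $DB$ is skew-symmetric and $\sum_{k=1}^N\overline b_{kj}\lambda_{ki}=\delta_{ij}\overline d_j$ in $\mathbb Z_\ell$ for all $i\in[1,N]$, $j\in\mathrm{ex}$. A root of unity quantum seed is a pair $(M,\widetilde B)$ with $M$ a root of unity toric frame and $(\Lambda_M,\widetilde B)$ $\ell$-compatible. For $b\in\mathbb Z^N$, $[b]_+$ (resp. $[b]_-$) is obtained from $b$ by replacing its negative (resp. positive) entries by $0$. Mutation in direction $k\in\mathrm{ex}$: $\mu_k(\widetilde B)=(b'_{ij})$ with $b'_{ij}=-b_{ij}$ if $i=k$ or $j=k$, and $b'_{ij}=b_{ij}+(|b_{ik}|b_{kj}+b_{ik}|b_{kj}|)/2$ otherwise; $\mu_k(M)$ is the root of unity toric frame with matrix $\overline E^\top\Lambda_M\overline E$ (where $E\in M_N(\mathbb Z)$ has $e_{ij}=\delta_{ij}$ for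 $j\ne k$, $e_{kk}=-1$, $e_{ik}=\max(0,-b_{ik})$ for $i\neq k$) and $\mu_k(M)(e_j)=M(e_j)$ for $j\neq k$, $\mu_k(M)(e_k)=M(-e_k+[b^k]_+)+M(-e_k-[b^k]_-)$; $\mu_k(M,\widetilde B)=(\mu_k(M),\mu_k(\widetilde B))$ is again a root of unity quantum seed. Seeds related by finite sequences of mutations are mutation-equivalent. The cluster variables of a seed $(M',\widetilde B')$ are $M'(e_i)$, $i\in[1,N]$; those with $i\notin\mathrm{ex}$ (frozen) are common to all mutation-equivalent seeds. For $\mathrm{inv}\subseteq[1,N]\setminus\mathrm{ex}$, $\mathcal A_\varepsilon(M,\widetilde B,\mathrm{inv})$ is the $\mathcal A^{1/2}_\varepsilon$-subalgebra of $\mathcal F$ generated by all cluster variables of all seeds mutation-equivalent to $(M,\widetilde B)$ and by $M(e_j)^{-1}$, $j\in\mathrm{inv}$; $\mathcal U_\varepsilon(M,\widetilde B,\mathrm{inv})$ is the intersection over all seeds $(M',\widetilde B')$ mutation-equivalent to $(M,\widetilde B)$ of the subalgebras $\mathcal A^{1/2}_\varepsilon\langle M'(e_i),M'(e_j)^{-1}: i\in[1,N],\ j\in\mathrm{ex}\sqcup\mathrm{inv}\rangle$ of $\mathcal F$. *)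

(* Defs.v *)
From HB Require Import structures.
From mathcomp Require Import all_boot all_order all_algebra.
Set Implicit Arguments. Unset Strict Implicit. Unset Printing Implicit Defensive.
Import Order.TTheory GRing.Theory Num.Theory.
Local Open Scope ring_scope.

Section RootOfUnityClusters.

(* l : the order of the root of unity eps^{1/2};
   K : a field playing the role of Q(eps^{1/2}), z : K the element eps^{1/2};
   F : a division algebra over K;  N : rank, vectors of Z^N are 'cV[int]_N. *)
Variables (l N : nat) (K : fieldType) (z : K) (F : unitAlgType K).

Definition vec := 'cV[int]_N.

Definition ebasis (i : 'I_N) : vec := delta_mx i 0.

(* the value Lambda(f,g) = f^T L g (an integer representative of an element of Z_l) *)
Definition bil (L : 'M[int]_N) (f g : vec) : int := (f^T *m L *m g) 0 0.

(* membership in A^{1/2}_eps = Z[eps^{1/2}] inside K *)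
Definition inA (a : K) : Prop := exists p : {poly int}, a = (map_poly intr p).[z].

Definition skew_mod (L : 'M[int]_N) : Prop :=
  forall i j, (L i j = - L j i %[mod (Posz l)])%Z.

Definition div_subalg (S : F -> Prop) : Prop :=
  [/\ S 1, (forall x y, S x -> S y -> S (x + y)), (forall x, S x -> S (- x)),
      (forall x y, S x -> S y -> S (x * y)) &
      (forall (a : K) x, S x -> S (a *: x)) /\
      (forall x, x != 0 -> S x -> S x^-1)].

(* M is a root of unity toric frame with (a representative L of) the form
   Lambda_M: the map X^f |-> M f is an injective A-algebra homomorphism
   T_eps(Lambda) -> F (multiplicativity on the basis + A-linear independence of
   the M f) and F is the skew field of fractions of its image (F is generated by
   the M f as a division K-algebra). *)
Definition toric_frame_with (M : vec -> F) (L : 'M[int]_N) : Prop :=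
  [/\ skew_mod L,
      (forall f g : vec, M f * M g = (z ^ bil L f g) *: M (f + g)),
      (forall (s : seq vec) (c : vec -> K), uniq s -> (forall f, inA (c f)) ->
          \sum_(f <- s) c f *: M f = 0 -> forall f, f \in s -> c f = 0)
    & (forall S : F -> Prop, div_subalg S -> (forall f, S (M f)) -> forall x, S x)].

Definition toric_frame (M : vec -> F) : Prop := exists L, toric_frame_with M L.

(* exchange matrices: N x N integer matrices, only the columns indexed by ex matter *)
Definition l_compatible (ex : {set 'I_N}) (L B : 'M[int]_N) : Prop :=
  exists d : 'I_N -> nat,
    [/\ (forall j, j \in ex -> (0 < d j)%N),
        (forall i j, i \in ex -> j \in ex -> (d i)%:Z * B i j = - ((d j)%:Z * B j i))
      & (forall i j, j \in ex ->
           (\sum_(k < N) B k j * L k i = (if i == j then (d j)%:Z else 0)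
              %[mod (Posz l)])%Z)].

Definition quantum_seed (ex : {set 'I_N}) (M : vec -> F) (B : 'M[int]_N) : Prop :=
  exists L, toric_frame_with M L /\ l_compatible ex L B.

Definition mutB (k : 'I_N) (B : 'M[int]_N) : 'M[int]_N :=
  \matrix_(i, j)
    if (i == k) || (j == k) then - B i j
    else B i j + ((`|B i k| * B k j + B i k * `|B k j|) %/ 2)%Z.

Definition mutE (k : 'I_N) (B : 'M[int]_N) : 'M[int]_N :=
  \matrix_(i, j)
    if j != k then (i == j)%:Z
    else if i == k then -1 else Num.max 0 (- B i k).

Definition vpos (b : vec) : vec := map_mx (fun x => Num.max x 0) b.
Definition vneg (b : vec) : vec := map_mx (fun x => Num.min x 0) b.

Definition seed := ((vec -> F) * 'M[int]_N)%type.

Definition mutation (ex : {set 'I_N}) (k : 'I_N) (S S' : seed) : Prop :=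
  let: (M, B) := S in let: (M', B') := S' in
  [/\ k \in ex, B' = mutB k B,
      exists L, toric_frame_with M L /\
                toric_frame_with M' ((mutE k B)^T *m L *m mutE k B),
      (forall j, j != k -> M' (ebasis j) = M (ebasis j))
    & M' (ebasis k) = M (- ebasis k + vpos (col k B)) + M (- ebasis k - vneg (col k B))].

Inductive mut_equiv (ex : {set 'I_N}) (S : seed) : seed -> Prop :=
  | meq_refl : mut_equiv ex S S
  | meq_step k S1 S2 : mut_equiv ex S S1 -> mutation ex k S1 S2 -> mut_equiv ex S S2.

Inductive in_cluster_alg (ex inv : {set 'I_N}) (M : vec -> F) (B : 'M[int]_N) : F -> Prop :=
  | ca_var M' B' i : mut_equiv ex (M, B) (M', B') ->
      in_cluster_alg ex inv M B (M' (ebasis i))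
  | ca_inv j : j \in inv -> in_cluster_alg ex inv M B (M (ebasis j))^-1
  | ca_one : in_cluster_alg ex inv M B 1
  | ca_add x y : in_cluster_alg ex inv M B x -> in_cluster_alg ex inv M B y ->
      in_cluster_alg ex inv M B (x + y)
  | ca_opp x : in_cluster_alg ex inv M B x -> in_cluster_alg ex inv M B (- x)
  | ca_mul x y : in_cluster_alg ex inv M B x -> in_cluster_alg ex inv M B y ->
      in_cluster_alg ex inv M B (x * y)
  | ca_scale a x : inA a -> in_cluster_alg ex inv M B x ->
      in_cluster_alg ex inv M B (a *: x).

Inductive in_laurent (J : {set 'I_N}) (M : vec -> F) : F -> Prop :=
  | la_var i : in_laurent J M (M (ebasis i))
  | la_inv j : j \in J -> in_laurent J M (M (ebasis j))^-1
  | la_one : in_laurent J M 1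
  | la_add x y : in_laurent J M x -> in_laurent J M y -> in_laurent J M (x + y)
  | la_opp x : in_laurent J M x -> in_laurent J M (- x)
  | la_mul x y : in_laurent J M x -> in_laurent J M y -> in_laurent J M (x * y)
  | la_scale a x : inA a -> in_laurent J M x -> in_laurent J M (a *: x).

Definition in_upper_cluster_alg (ex inv : {set 'I_N}) (M : vec -> F) (B : 'M[int]_N)
  (x : F) : Prop :=
  forall M' B', mut_equiv ex (M, B) (M', B') -> in_laurent (ex :|: inv) M' x.

End RootOfUnityClusters.

(* A subring S of a ring R (given as a predicate closed under the ring operations)
   is a PI domain: it has no zero divisors (and 1 != 0), and it satisfies a
   polynomial identity: there is a noncommutative polynomial
   f = sum_{w in ws} c_w x_w  in Z<x_0,...,x_{n-1}>  (ws a list of distinct words,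
   x_w the product of the letters of w in order) with some coefficient equal to 1,
   such that f vanishes for every substitution of elements of S. *)
Definition PI_domain (R : nzRingType) (S : R -> Prop) : Prop :=
  (forall x y, S x -> S y -> x * y = 0 -> x = 0 \/ y = 0) /\
  exists (n : nat) (ws : seq (seq 'I_n)) (c : seq 'I_n -> int),
    [/\ uniq ws, (exists2 w, w \in ws & c w = 1)
      & forall xs : 'I_n -> R, (forall i, S (xs i)) ->
          \sum_(w <- ws) (c w)%:~R * \prod_(i <- w) xs i = 0].

(* Main.v *)
Require Import Defs.
Set Warnings "-notation-overridden,-ambiguous-paths,-redundant-canonical-projection,-projection-no-head-constant,-notation-incompatible-prefix".
From HB Require Import structures.
From mathcomp Require Import all_boot all_order all_algebra all_fingroup.
From Stdlib Require Import ClassicalEpsilon.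
Set Implicit Arguments. Unset Strict Implicit. Unset Printing Implicit Defensive.
Import Order.TTheory GRing.Theory Num.Theory.
Local Open Scope ring_scope.


Section Center.
Variables (K : fieldType) (F : unitAlgType K).

Definition centralP (x : F) := forall y, x * y = y * x.
Definition centralb (x : F) : bool :=
  if excluded_middle_informative (centralP x) then true else false.
Lemma centralbP x : reflect (centralP x) (centralb x).
Proof. rewrite /centralb; case: excluded_middle_informative => h; by constructor. Qed.

Lemma central_divring : divring_closed centralb.
Proof.
split.
- by apply/centralbP => y; rewrite mul1r mulr1.
- move=> x y /centralbP hx /centralbP hy; apply/centralbP => w.
  by rewrite mulrBl mulrBr hx hy.
- move=> x y /centralbP hx /centralbP hy; apply/centralbP => w.
  have hyi : centralP y^-1.
    move=> t; case: (boolP (y \is a GRing.unit)) => uy; last by rewrite invr_out.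
    apply: (mulrI uy); rewrite mulrA divrr // mul1r mulrA hy.
    by rewrite -mulrA divrr // mulr1.
  by rewrite -mulrA hyi !mulrA hx.
Qed.

Record Zc := MkZc { zval : F; zvalP : centralb zval }.
HB.instance Definition _ := [isSub for zval].
HB.instance Definition _ := [Choice of Zc by <:].
HB.instance Definition _ := GRing.SubChoice_isSubUnitRing.Build F centralb Zc central_divring.
Lemma Zc_mulC : commutative (@GRing.mul Zc).
Proof. move=> [x hx] [y hy]; apply: val_inj => /=. by move/centralbP: hx. Qed.
HB.instance Definition _ := GRing.PzSemiRing_hasCommutativeMul.Build Zc Zc_mulC.
Hypothesis hF : forall x : F, x != 0 -> x \is a GRing.unit.
Lemma Zc_field : GRing.field_axiom Zc.
Proof.
move=> x nx0.
have h : zval x != 0 by apply: contra nx0 => /eqP h; apply/eqP/val_inj.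
exact: hF h.
Qed.
HB.instance Definition _ := GRing.ComUnitRing_isField.Build Zc Zc_field.

Lemma kerT m (A : 'M[Zc]_(m.+1, m)) : exists2 w : 'rV_(m.+1), w != 0 & w *m A = 0.
Proof.
have hr : (0 < \rank (kermx A))%N.
  rewrite mxrank_ker subn_gt0; apply: leq_ltn_trans (rank_leq_col A) _; exact: ltnSn.
have : kermx A != 0 by rewrite -mxrank_eq0 -lt0n.
case/matrix0Pn => i [j hij].
exists (row i (kermx A)).
  by apply/rV0Pn; exists j; rewrite mxE.
by rewrite -row_mul mulmx_ker row0.
Qed.

Lemma val_comm (c : Zc) (y : F) : val c * y = y * val c.
Proof. by case: c => x hx /=; apply: (elimT (centralbP x) hx). Qed.

Lemma zval_comm (c : Zc) (y : F) : zval c * y = y * zval c.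
Proof. exact: val_comm. Qed.

Lemma prod_val (I : Type) (r : seq I) (P : pred I) (c : I -> Zc) (f : I -> F) :
  \prod_(i <- r | P i) (val (c i) * f i) =
  val (\prod_(i <- r | P i) c i) * \prod_(i <- r | P i) f i.
Proof.
elim: r => [|i r IH]; first by rewrite !big_nil rmorph1 mul1r.
rewrite !big_cons; case: (P i); last exact: IH.
by rewrite IH rmorphM /= -!mulrA; congr (_ * _); rewrite !mulrA val_comm.
Qed.

Hypothesis hchar2 : (2%:R : K) != 0.

Lemma alt0 n (y : 'I_n -> F) i j : i != j -> y i = y j ->
  \sum_(s : 'S_n) (-1) ^+ s * \prod_(t < n) y (s t) = 0.
Proof.
move=> ij yij; set S := \sum_(s : 'S_n) _.
have HS : S = - S.
  rewrite {1}/S (reindex_inj (mulIg (tperm i j))) /= -sumrN.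
  apply: eq_bigr => s _; rewrite odd_permM odd_tperm ij signr_addb expr1 mulrN1 mulNr.
  congr (- (_ * _)); apply: eq_bigr => t _; rewrite permM.
  by case: tpermP => // ->.
have : (2%:R : K) *: S = 0 by rewrite scaler_nat mulr2n {1}HS addNr.
by move/eqP; rewrite scaler_eq0 (negbTE hchar2) /= => /eqP.
Qed.

Lemma std_id (B : finType) (a : B -> F) n (hn : (#|B| < n)%N) (U : 'I_n -> B -> Zc) :
  \sum_(s : 'S_n) (-1) ^+ s * \prod_(t < n) (\sum_b val (U (s t) b) * a b) = 0.
Proof.
have E1 : forall s : 'S_n, (-1) ^+ s * \prod_(t < n) (\sum_b val (U (s t) b) * a b) =
   \sum_(f : {ffun 'I_n -> B}) val (\prod_t U t (f t)) * ((-1) ^+ s * \prod_t a (f (s t))).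
  move=> s; rewrite bigA_distr_bigA big_distrr /=.
  rewrite (reindex_inj (h := fun f : {ffun 'I_n -> B} => [ffun t => f (s t)])); last first.
    move=> f g /ffunP E; apply/ffunP => k; have := E (s^-1 k)%g; rewrite !ffunE permKV.
    by [].
  apply: eq_bigr => f _; rewrite prod_val mulrA -val_comm -mulrA; congr (val _ * _).
    symmetry; rewrite (reindex_inj (@perm_inj _ s)) /=.
    by apply: eq_bigr => t _; rewrite ffunE.
  by congr (_ * _); apply: eq_bigr => t _; rewrite ffunE.
rewrite (eq_bigr _ (fun s _ => E1 s)) exchange_big /=.
apply: big1 => f _; rewrite -big_distrr /=.
have : ~~ injectiveb f.
  apply/negP => /injectiveP /leq_card; rewrite card_ord => h.
  by move: (leq_trans hn h); rewrite ltnn.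
case/injectivePn => i [j ij fij].
by rewrite (alt0 (y := fun t => a (f t)) ij) ?mulr0 //= fij.
Qed.
End Center.

Section Main.
Variables (l' N : nat) (K : fieldType) (z : K) (F : unitAlgType K).
Local Notation l := l'.+1.
Hypothesis hz : l.-primitive_root z.
Hypothesis hF : forall x : F, x != 0 -> x \is a GRing.unit.
Variables (M : vec N -> F) (L : 'M[int]_N).
Hypothesis hT : toric_frame_with l z M L.

Lemma gen S : div_subalg S -> (forall f, S (M f)) -> forall x, S x.
Proof. by move: hT => [_ _ _ h]; apply: h. Qed.

Lemma Mmul f g : M f * M g = z ^ bil L f g *: M (f + g).
Proof. by move: hT => [_ h _ _]; apply: h. Qed.

Lemma M_neq0 f : M f != 0.
Proof.
move: hT => [_ _ hind _]; apply/negP => /eqP h.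
have := hind [:: f] (fun _ => 1) erefl.
have h1 : inA z 1 by exists 1; rewrite rmorph1 hornerC.
move=> /(_ (fun _ => h1)); rewrite big_seq1 scale1r h => /(_ erefl f).
by rewrite mem_seq1 eqxx => /(_ erefl) /eqP; rewrite oner_eq0.
Qed.

Lemma bil0 : bil L 0 0 = 0.
Proof. by rewrite /bil trmx0 mul0mx mul0mx mxE. Qed.

Lemma M0 : M 0 = 1.
Proof.
have u := hF (M_neq0 0).
apply: (mulrI u); rewrite mulr1 Mmul bil0 expr0z scale1r addr0 //.
Qed.

Lemma zl : z ^+ l = 1.
Proof. exact: prim_expr_order hz. Qed.

Lemma zexp (k : int) : z ^ (l%:Z * k) = 1.
Proof. by rewrite -exprz_exp -exprnP zl exp1rz. Qed.

Lemma bil_scale_r f q : bil L f (l%:Z *: q) = l%:Z * bil L f q.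
Proof. by rewrite /bil -scalemxAr mxE. Qed.

Lemma bil_scale_l f q : bil L (l%:Z *: q) f = l%:Z * bil L q f.
Proof. by rewrite /bil linearZ /= -!scalemxAl mxE. Qed.

Lemma Mlq_mul q f : M (l%:Z *: q) * M f = M (l%:Z *: q + f).
Proof. by rewrite Mmul bil_scale_l zexp scale1r. Qed.

Lemma Mlq_comm q f : M (l%:Z *: q) * M f = M f * M (l%:Z *: q).
Proof. by rewrite Mlq_mul Mmul bil_scale_r zexp scale1r addrC. Qed.

Lemma central_gen x : (forall f, x * M f = M f * x) -> centralb x.
Proof.
move=> hx; apply/centralbP; apply: (gen (S := fun y => x * y = y * x)) => //.
split.
- by rewrite mulr1 mul1r.
- by move=> y w hy hw; rewrite mulrDr mulrDl hy hw.
- by move=> y hy; rewrite mulrN mulNr hy.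
- by move=> y w hy hw; rewrite mulrA hy -mulrA hw mulrA.
split.
- by move=> c y hy; rewrite -scalerAr -scalerAl hy.
- move=> y ny hy; have uy := hF ny.
  by apply: (mulrI uy); rewrite mulVKr // mulrA -hy mulrK.
Qed.


Lemma Mlq_central q : centralb (M (l%:Z *: q)).
Proof. by apply: central_gen => f; exact: Mlq_comm. Qed.

Definition BB := {ffun 'I_N -> 'I_l}.
Definition rho (b : BB) : vec N := \col_i ((b i : nat)%:Z).
Definition aa (b : BB) : F := M (rho b).
Definition rg (g : vec N) : BB := [ffun i => inord (absz ((g i ord0) %% l)%Z)].
Definition qg (g : vec N) : vec N := \col_i ((g i ord0) %/ l)%Z.

Lemma decomp g : g = l%:Z *: qg g + rho (rg g).
Proof.
apply/matrixP => i j; rewrite (ord1 j) !mxE ffunE.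
have h0 : (0 <= (g i ord0 %% l)%Z)%R by rewrite modz_ge0.
have h1 : ((g i ord0 %% l)%Z < l%:Z)%R by rewrite ltz_pmod.
rewrite inordK; last by rewrite -ltz_nat abszE ger0_norm.
by rewrite abszE ger0_norm // mulrC {1}(divz_eq (g i ord0) l%:Z).
Qed.

Lemma Mbox g : M g = M (l%:Z *: qg g) * aa (rg g).
Proof. by rewrite /aa Mlq_mul -decomp. Qed.


Lemma alg_central (k : K) : centralb (k%:A : F).
Proof. by apply/centralbP => y; rewrite mulr_algl mulr_algr. Qed.
Definition zA k : Zc F := MkZc (alg_central k).

Definition W (x : F) := exists s : seq (Zc F * vec N), x = \sum_(p <- s) val p.1 * M p.2.

Lemma W0 : W 0.
Proof. by exists [::]; rewrite big_nil. Qed.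

Lemma WM f : W (M f).
Proof. by exists [:: (1, f)]; rewrite big_seq1 rmorph1 mul1r. Qed.

Lemma Wval (c : Zc F) : W (val c).
Proof. by exists [:: (c, 0)]; rewrite big_seq1 /= M0 mulr1. Qed.

Lemma W1 : W 1.
Proof. by rewrite -M0; exact: WM. Qed.

Lemma WD x y : W x -> W y -> W (x + y).
Proof. by move=> [s ->] [t ->]; exists (s ++ t); rewrite big_cat. Qed.

Lemma WN x : W x -> W (- x).
Proof.
move=> [s ->]; exists [seq (- p.1, p.2) | p <- s]; rewrite big_map -sumrN.
by apply: eq_bigr => p _; rewrite rmorphN mulNr.
Qed.

Lemma WZ k x : W x -> W (k *: x).
Proof.
move=> [s ->]; exists [seq (zA k * p.1, p.2) | p <- s]; rewrite big_map scaler_sumr.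
by apply: eq_bigr => p _; rewrite rmorphM -mulrA mulr_algl.
Qed.

Lemma WMul x y : W x -> W y -> W (x * y).
Proof.
move=> [s ->] [t ->].
exists [seq (p.1 * q.1 * zA (z ^ bil L p.2 q.2), p.2 + q.2) | p <- s, q <- t].
rewrite big_allpairs_dep big_distrl /=; apply: eq_bigr => p _.
rewrite big_distrr; apply: eq_bigr => q _.
rewrite /= -!mulrA; congr (_ * _).
by rewrite mulrA -zval_comm -mulrA Mmul mulr_algl.
Qed.

Lemma Wsum (I : Type) (r : seq I) (f : I -> F) : (forall i, W (f i)) -> W (\sum_(i <- r) f i).
Proof. by move=> h; apply: big_ind => //; [exact: W0 | exact: WD]. Qed.

Lemma W_box x : W x -> exists u : BB -> Zc F, x = \sum_b val (u b) * aa b.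
Proof.
move=> [s ->]; elim: s => [|p s [u IH]].
  by exists (fun _ => 0); rewrite big_nil big1 // => b _; rewrite rmorph0 mul0r.
pose c : Zc F := p.1 * MkZc (Mlq_central (qg p.2)).
exists (fun b => u b + (b == rg p.2)%:R * c).
rewrite big_cons IH addrC.
transitivity (\sum_b (val (u b) * aa b + val ((b == rg p.2)%:R * c) * aa b)); last first.
  by apply: eq_bigr => b _; rewrite rmorphD mulrDl.
rewrite big_split; congr (_ + _).
rewrite (bigD1 (rg p.2)) // big1 ?addr0.
  by rewrite eqxx mul1r rmorphM -mulrA /= addr0 -Mbox.
by move=> b /andP[_ /negbTE ->]; rewrite mul0r rmorph0 mul0r.
Qed.


Lemma Wexp x i : W x -> W (x ^+ i).
Proof. by move=> Wx; elim: i => [|i IH]; [rewrite expr0; exact: W1 | rewrite exprS; exact: WMul]. Qed.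

Lemma val_neq0 (c : Zc F) : c != 0 -> val c != 0.
Proof. by apply: contra => /eqP h; apply/eqP/val_inj; rewrite h rmorph0. Qed.

Lemma inv_step x (hx : x != 0) (Wx : W x) : forall i0 n (c : nat -> Zc F),
  (i0 < n)%N -> c i0 != 0 -> (forall i, (i < i0)%N -> c i = 0) ->
  \sum_(0 <= i < n) val (c i) * x ^+ i = 0 -> W x^-1.
Proof.
have ux := hF hx.
have shift : forall n (c : nat -> Zc F), \sum_(0 <= i < n.+1) val (c i) * x ^+ i =
   val (c 0%N) + x * \sum_(0 <= i < n) val (c i.+1) * x ^+ i.
  move=> n c; rewrite big_nat_recl // expr0 mulr1 mulr_sumr; congr (_ + _).
  by apply: eq_bigr => i _; rewrite exprS mulrA val_comm -mulrA.
elim=> [|i0 IH] n c hn hc hlt hs.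
  case: n hn hs => // n _; rewrite shift => hs.
  set Y := \sum_(0 <= i < n) _ in hs.
  have hY : Y = x^-1 * (- val (c 0%N)).
    by rewrite -(mulKr ux Y); congr (_ * _); apply/eqP; rewrite -addr_eq0 addrC hs.
  have hu : (- val (c 0%N)) \is a GRing.unit by apply: hF; rewrite oppr_eq0 val_neq0.
  have -> : x^-1 = Y * (val (- c 0%N))^-1 by rewrite rmorphN hY mulrK.
  apply: WMul; first by apply: Wsum => i; apply: WMul; [exact: Wval | exact: Wexp].
  have -> : (val (- c 0%N))^-1 = val ((- c 0%N)^-1) by []. exact: Wval.
case: n hn hs => // n hn; rewrite shift (hlt 0%N) // rmorph0 add0r => hs.
apply: (IH n (fun i => c i.+1)) => //.
- by move=> i hi; apply: hlt.
- by rewrite -(mulKr ux (\sum_(0 <= i < n) _)) hs mulr0.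
Qed.

Lemma W_inv x : W x -> W x^-1.
Proof.
move=> Wx; have [->|hx] := eqVneq x 0; first by rewrite invr0; exact: W0.
pose m := #|BB|.
have : forall i : 'I_m.+1, exists u : BB -> Zc F, x ^+ i = \sum_b val (u b) * aa b.
  by move=> i; apply: W_box; exact: Wexp.
case/fin_all_exists => U hU.
pose A : 'M[Zc F]_(m.+1, m) := \matrix_(i, j) U i (enum_val j).
have [w wn0 wA] := kerT hF A.
pose c i := w 0 (inord i).
have hsum : \sum_(0 <= i < m.+1) val (c i) * x ^+ i = 0.
  rewrite big_mkord (eq_bigr (fun i : 'I_m.+1 => val (w 0 i) * x ^+ i)); last first.
    by move=> i _; rewrite /c inord_val.
  rewrite (eq_bigr (fun i : 'I_m.+1 => \sum_b val (w 0 i) * (val (U i b) * aa b))); last first.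
    by move=> i _; rewrite hU mulr_sumr.
  rewrite exchange_big /=; apply: big1 => b _.
  rewrite (eq_bigr (fun i => val (w 0 i * U i b) * aa b)); last first.
    by move=> i _; rewrite mulrA rmorphM.
  rewrite -mulr_suml -rmorph_sum.
  have -> : \sum_i w 0 i * U i b = (w *m A) 0 (enum_rank b).
    by rewrite mxE; apply: eq_bigr => i _; rewrite mxE enum_rankK.
  by rewrite wA mxE rmorph0 mul0r.
have hex : exists i, (i < m.+1)%N && (c i != 0).
  case/rV0Pn: wn0 => j hj; exists j; rewrite ltn_ord /c inord_val; exact: hj.
pose i0 := ex_minn hex.
have [hi0 hmin] : ((i0 < m.+1)%N && (c i0 != 0)) /\ forall i, (i < m.+1)%N && (c i != 0) -> (i0 <= i)%N.
  by rewrite /i0; case: ex_minnP.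
case/andP: hi0 => h1 h2.
apply: (inv_step hx Wx h1 h2) => // i hi; apply/eqP; apply: contraTT hi => hci.
rewrite -leqNgt; case: (ltnP i m.+1) => him; [by apply: hmin; rewrite him hci | exact: leq_trans (ltnW h1) him].
Qed.

Lemma all_W x : W x.
Proof.
apply: gen; last exact: WM.
split; [exact: W1 | exact: WD | exact: WN | exact: WMul | split].
  by move=> k y; exact: WZ.
by move=> y _; exact: W_inv.
Qed.


Definition word n (s : 'S_n) : seq 'I_n := [seq s t | t <- enum 'I_n].

Lemma word_inj n : injective (@word n).
Proof.
move=> s t /eq_in_map h; apply/permP => k; apply: h; by rewrite mem_enum.
Qed.

Hypothesis hchar2 : (2%:R : K) != 0.

Lemma PI_all (S : F -> Prop) : PI_domain S.
Proof.
split.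
  move=> x y _ _ hxy; have [->|hx] := eqVneq x 0; first by left.
  by right; rewrite -(mulKr (hF hx) y) hxy mulr0.
pose n := #|BB|.+1.
pose cw (w : seq 'I_n) : int := \sum_(s : 'S_n | word s == w) (-1) ^+ s.
have cwE : forall s, cw (word s) = (-1) ^+ s.
  move=> s; rewrite /cw (big_pred1 s) // => t /=; by rewrite (inj_eq (@word_inj n)).
exists n, [seq word s | s <- enum 'S_n], cw; split.
- by rewrite map_inj_uniq ?enum_uniq //; exact: word_inj.
- by exists (word 1); [apply: map_f; rewrite mem_enum | rewrite cwE odd_perm1].
move=> xs _.
have : forall t : 'I_n, exists u : BB -> Zc F, xs t = \sum_b val (u b) * aa b.
  by move=> t; apply: W_box; exact: all_W.
case/fin_all_exists => U hU.
rewrite big_map big_enum /=.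
rewrite (eq_bigr (fun s : 'S_n => (-1) ^+ s * \prod_(t < n) \sum_b val (U (s t) b) * aa b)).
  exact: (std_id hchar2 aa (ltnSn #|BB|) U).
move=> s _; rewrite cwE rmorph_sign; congr (_ * _).
rewrite /word big_map enumT; apply: eq_bigr => t _; exact: hU.
Qed.

End Main.

Theorem theorem3p11
  (l N : nat) (K : fieldType) (z : K) (F : unitAlgType K)
  (hl : (0 < l)%N) (hz : l.-primitive_root z)
  (hchar : [pchar K] =i pred0)
  (hK : forall x : K, exists p : {poly rat}, x = (map_poly ratr p).[z])
  (hF : forall x : F, x != 0 -> x \is a GRing.unit)
  (ex inv : {set 'I_N}) (M : vec N -> F) (B : 'M[int]_N)
  (hseed : quantum_seed l z ex M B)
  (hinv : inv \subset ~: ex) :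
  PI_domain (in_cluster_alg l z ex inv M B) /\
  PI_domain (in_upper_cluster_alg l z ex inv M B).
Proof.
have hchar2 : (2%:R : K) != 0.
  by have := hchar 2%N; rewrite !inE /= => ->.
case: l hl hz hseed => // l' _ hz [L [hT _]].
by split; apply: (PI_all hz hF hT hchar2).
Qed.
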